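(* There exists an absolute constant $C_0>0$ such that for every increasing function $F:\mathbb{N}\to\mathbb{N}$ there exist functions $d,r:\mathbb{N}\to\mathbb{N}$ such that: $d$ is nondecreasing and takes only prime values at least $5$; $d(n)\ge2r(n)+1$, $r(n)\ge n$, $d(n)-2r(n)\ge n$ and $3r(n)\le d(n)$ for all $n$; $r$ is strictly increasing; and, with $G=\langle S\rangle$, $S=\{\alpha,\beta\}$, where $\alpha=(\alpha_n)_n,\beta=(\beta_n)_n\in\prod_n\mathrm{Alt}(d(n))$, $\alpha_n=(1\;2\;\cdots\;d(n))$, $\beta_n=(1\;(1+r(n))\;(1+2r(n)))$, we have $\mathcal{R}_G^S(n)\ge F(n)$ for all $n\ge C_0$.
   Context: $\mathbb{N}=\{1,2,\dots\}$. $B_S(l)$ is the ball of radius $l$ about $e$ in the word metric of $S$. $\mathcal{R}_G^S(l)$ (full residual finiteness growth) is the minimal order of a finite group $\Delta$ admitting a homomorphism $G\to\Delta$ whose restriction to $B_S(l)$ is injective. *)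

(* Defs.v *)
From Stdlib Require Import ClassicalEpsilon.
From mathcomp Require Import all_boot all_fingroup.

Set Implicit Arguments.
Unset Strict Implicit.
Unset Printing Implicit Defensive.

Section ResidualFiniteness.
Variables (T : Type) (mul : T -> T -> T) (one : T) (inv : T -> T) (S : seq T).

(* a letter is a generator s_i or its inverse s_i^-1 (boolean = inverted) *)
Definition letter_val (a : bool * 'I_(size S)) : T :=
  let s := nth one S a.2 in if a.1 then inv s else s.

Definition word_eval (w : seq (bool * 'I_(size S))) : T :=
  foldr (fun a acc => mul (letter_val a) acc) one w.

Definition in_gen (x : T) : Prop := exists w, word_eval w = x.

Definition in_ball (l : nat) (x : T) : Prop :=
  exists w, size w <= l /\ word_eval w = x.

(* phi : G -> gT is a group homomorphism (values outside G irrelevant) *)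
Definition hom_on_gen (gT : finGroupType) (phi : T -> gT) : Prop :=
  forall x y, in_gen x -> in_gen y -> phi (mul x y) = (phi x * phi y)%g.

Definition admits_quotient (l m : nat) : Prop :=
  exists (gT : finGroupType) (phi : T -> gT),
    [/\ hom_on_gen phi,
        (forall x y, in_ball l x -> in_ball l y -> phi x = phi y -> x = y)
      & #|gT| = m].

Definition admits_quotientb (l m : nat) : bool :=
  if excluded_middle_informative (admits_quotient l m) then true else false.

Lemma admits_quotientbP l m : admits_quotientb l m <-> admits_quotient l m.
Proof.
rewrite /admits_quotientb; case: excluded_middle_informative => H; split => //.
Qed.

Lemma admits_quotient_exb l :
  (exists m, admits_quotient l m) -> exists m, admits_quotientb l m.
Proof. by case=> m Hm; exists m; apply/admits_quotientbP. Qed.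

(* R_G^S(l): the minimal such order (0 if no such finite quotient exists,
   which never happens for residually finite G) *)
Definition RF_growth (l : nat) : nat :=
  match excluded_middle_informative (exists m, admits_quotient l m) with
  | left H => ex_minn (admits_quotient_exb H)
  | right _ => 0
  end.

End ResidualFiniteness.

(* The product  prod_{n >= 1} Alt(d(n)) (as a subgroup of the product of *)
(* the symmetric groups; G = <alpha, beta> lies in the Alt part anyway). *)
(* Points {1,...,d} are represented by 'I_d = {0,...,d-1}.  The paper's  *)
(* index set is N = {1,2,...}; the component n = 0 of our product is     *)
(* made trivial (alpha_0 = beta_0 = id), so it plays no role.            *)

(* the d-cycle (1 2 ... d), i.e. i |-> i+1 mod d on 'I_d *)
Definition cycle_perm (m : nat) : {perm 'I_m} := perm (@ordS_inj m).

(* the 3-cycle (1  1+r  1+2r), i.e. 0 -> r -> 2r -> 0 on 'I_m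
   (meaningful when 0 < r and 2r < m) *)
Definition three_cycle (m r : nat) : {perm 'I_m} :=
  match m as k return {perm 'I_k} with
  | 0 => 1%g
  | k.+1 => (tperm (inord 0) (inord r) * tperm (inord 0) (inord (2 * r)))%g
  end.

Section ProdAlt.
Variables d r : nat -> nat.

Definition PT := forall n : nat, {perm 'I_(d n)}.
Definition pt_mul (x y : PT) : PT := fun n => (x n * y n)%g.
Definition pt_one : PT := fun n => 1%g.
Definition pt_inv (x : PT) : PT := fun n => ((x n)^-1)%g.

Definition alpha : PT := fun n => if n == 0 then 1%g else cycle_perm (d n).
Definition beta : PT := fun n => if n == 0 then 1%g else three_cycle (d n) (r n).

Definition RF_alpha_beta (l : nat) : nat :=
  RF_growth pt_mul pt_one pt_inv [:: alpha; beta] l.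

End ProdAlt.

(* Main.v *)
Require Import Defs.
From mathcomp Require Import all_boot all_fingroup all_solvable zify.
From Stdlib Require Import FunctionalExtensionality Classical ClassicalEpsilon.
Set Implicit Arguments. Unset Strict Implicit. Unset Printing Implicit Defensive.

Lemma tperm_disj_comm (T : finType) (x1 x2 y1 y2 : T) :
  x1 != y1 -> x1 != y2 -> x2 != y1 -> x2 != y2 ->
  commute (tperm x1 x2) (tperm y1 y2).
Proof.
move=> h11 h12 h21 h22; apply/permP => z; rewrite !permM.
have s a b : a != b -> b != a by rewrite eq_sym.
case: (tpermP x1 x2 z) => [->|->|/eqP n1 /eqP n2].
- by rewrite (tpermD (s _ _ _ h21) (s _ _ _ h22)) (tpermD (s _ _ _ h11) (s _ _ _ h12)) tpermL.
- by rewrite (tpermD (s _ _ _ h11) (s _ _ _ h12)) (tpermD (s _ _ _ h21) (s _ _ _ h22)) tpermR.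
case: (tpermP y1 y2 z) => [_|_|/eqP m1 /eqP m2].
- by rewrite (tpermD h12 h22).
- by rewrite (tpermD h11 h21).
by rewrite (tpermD (s _ _ _ n1) (s _ _ _ n2)).
Qed.

Lemma rotE q (z : 'I_q) k : (cycle_perm q ^+ k)%g z = (z + k) %% q :> nat.
Proof.
elim: k => [|k IH]; first by rewrite expg0 perm1 addn0 modn_small.
rewrite expgSr permM /cycle_perm permE /= IH.
by rewrite -[_.+1]addn1 modnDml addn1 addnS.
Qed.

Lemma neq_val q (x y : 'I_q) : x <> y :> nat -> x != y.
Proof. by move=> h; apply/eqP => e; apply: h; rewrite e. Qed.

Lemma three_cycleE q rr : three_cycle q.+1 rr =
  (tperm (inord 0) (inord rr) * tperm (inord 0) (inord (2 * rr)))%g.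
Proof. by []. Qed.

Lemma tc_commute q rr k : 0 < rr -> k %% q + 2 * rr < q ->
  k %% q != 0 -> k %% q != rr -> k %% q != 2 * rr ->
  commute (three_cycle q rr) (three_cycle q rr ^ (cycle_perm q ^+ k))%g.
Proof.
case: q => [|q] rr0 hq h0 h1 h2; first by [].
rewrite three_cycleE conjMg !tpermJ.
set s := k %% q.+1 in hq h0 h1 h2.
have v0 : (inord 0 : 'I_q.+1) = 0 :> nat by rewrite inordK.
have v1 : (inord rr : 'I_q.+1) = rr :> nat by rewrite inordK //; lia.
have v2 : (inord (2 * rr) : 'I_q.+1) = 2 * rr :> nat by rewrite inordK //; lia.
have w v : v < q.+1 -> v + s < q.+1 ->
  (cycle_perm q.+1 ^+ k)%g (inord v) = v + s :> nat.
  by move=> hv hvs; rewrite rotE inordK // -modnDmr modn_small.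
have {}w0 : (cycle_perm q.+1 ^+ k)%g (inord 0) = s :> nat by rewrite w //; lia.
have {}w1 : (cycle_perm q.+1 ^+ k)%g (inord rr) = rr + s :> nat by apply: w; lia.
have {}w2 : (cycle_perm q.+1 ^+ k)%g (inord (2 * rr)) = 2 * rr + s :> nat
  by apply: w; lia.
move: h0 h1 h2 => /eqP h0 /eqP h1 /eqP h2.
apply: commuteM; apply: commute_sym; apply: commuteM; apply: commute_sym;
  apply: tperm_disj_comm; apply: neq_val; rewrite ?v0 ?v1 ?v2 ?w0 ?w1 ?w2; lia.
Qed.

Definition tp (a b u : nat) := if u == a then b else if u == b then a else u.
Fixpoint tl (L : seq (nat * nat)) u :=
  if L is ab :: L' then tl L' (tp ab.1 ab.2 u) else u.
Definition okL (L : seq (nat * nat)) := all (fun ab => (ab.1 < 7) && (ab.2 < 7)) L.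

Section Transport.
Variables (P r : nat).
Hypotheses (r0 : 0 < r) (rP : 6 * r < P).
Lemma P0 : 0 < P. Proof. by apply: leq_ltn_trans rP. Qed.
Definition fp (v : nat) : 'I_P := Ordinal (ltn_pmod (v * r) P0).
Definition tlf (L : seq (nat * nat)) : {perm 'I_P} :=
  foldr (fun ab acc => (tperm (fp ab.1) (fp ab.2) * acc)%g) 1%g L.

Lemma fpE v : v < 7 -> fp v = v * r :> nat.
Proof. by move=> hv; rewrite /fp /= modn_small //; nia. Qed.

Lemma fp_inj u v : u < 7 -> v < 7 -> (fp u == fp v) = (u == v).
Proof.
move=> hu hv; apply/eqP/eqP => [e|->] //.
have := congr1 (@nat_of_ord _) e; rewrite !fpE //; nia.
Qed.

Lemma tp_lt a b u : a < 7 -> b < 7 -> u < 7 -> tp a b u < 7.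
Proof. by rewrite /tp; case: (u == a); case: (u == b). Qed.

Lemma tl_lt L u : okL L -> u < 7 -> tl L u < 7.
Proof.
elim: L u => [|[a b] L IH] u //= /andP[/andP[ha hb] hL] hu.
by apply: IH => //; apply: tp_lt.
Qed.

Lemma tlf_f L u : okL L -> u < 7 -> tlf L (fp u) = fp (tl L u).
Proof.
elim: L u => [|[a b] L IH] u /=; first by rewrite perm1.
move=> /andP[/andP[ha hb] hL] hu; rewrite permM.
have -> : tperm (fp a) (fp b) (fp u) = fp (tp a b u).
  rewrite /tp; case: tpermP => [/eqP|/eqP|/eqP n1 /eqP n2].
  - by rewrite fp_inj // => /eqP->; rewrite eqxx.
  - rewrite fp_inj // => /eqP->; rewrite eqxx; case: eqP => [->|] //.
  - by move: n1 n2; rewrite !fp_inj // => /negPf-> /negPf->.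
by rewrite IH //; apply: tp_lt.
Qed.

Lemma tlf_out L z : (forall v, v < 7 -> z != fp v) -> okL L -> tlf L z = z.
Proof.
move=> hz; elim: L => [|[a b] L IH] /=; first by rewrite perm1.
move=> /andP[/andP[ha hb] hL]; rewrite permM tpermD ?IH //;
  by rewrite eq_sym; apply: hz.
Qed.

Lemma tlf_eq L1 L2 : okL L1 -> okL L2 ->
  (forall u, u < 7 -> tl L1 u = tl L2 u) -> tlf L1 = tlf L2.
Proof.
move=> h1 h2 e; apply/permP => z.
case: (boolP [exists v : 'I_7, z == fp v]) => [/existsP[v /eqP->]|].
  by rewrite !tlf_f // e.
move/existsPn => hz.
have hz' v : v < 7 -> z != fp v by move=> hv; exact: (hz (Ordinal hv)).
by rewrite !tlf_out.
Qed.

Lemma tlf_cat L1 L2 : tlf (L1 ++ L2) = (tlf L1 * tlf L2)%g.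
Proof. by elim: L1 => [|ab L IH] /=; rewrite ?mul1g // IH mulgA. Qed.

Definition shiftL u (L : seq (nat * nat)) := [seq (ab.1 + u, ab.2 + u) | ab <- L].

Lemma tlf_conj L (s : {perm 'I_P}) u :
  okL (shiftL u L) -> (forall v, v + u < 7 -> s (fp v) = fp (v + u)) ->
  (tlf L ^ s)%g = tlf (shiftL u L).
Proof.
move=> hL hs; elim: L hL => [|[a b] L IH] /=; first by rewrite conj1g.
move=> /andP[/andP[ha hb] hL]; rewrite conjMg tpermJ IH // !hs //.
Qed.
End Transport.

Definition Lc := [:: (0,3); (1,2)].
Definition Lcomm := [:: (0,2);(0,1);(1,3);(1,2);(0,1);(0,2);(1,2);(1,3)].
Lemma t1 : all (fun u => tl Lcomm u == tl Lc u) (iota 0 7) = true. Proof. vm_compute. reflexivity. Qed.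
Definition U := [:: 0;1;0;1;3;0;2;1;3;0;3;0;2].
Definition Lrel := flatten [seq shiftL u Lc | u <- U].
Lemma t2 : all (fun u => tl Lrel u == u) (iota 0 7) = true. Proof. vm_compute. reflexivity. Qed.
Lemma t3 : all (fun u => tl (Lc ++ Lc) u == u) (iota 0 7) = true. Proof. vm_compute. reflexivity. Qed.
Lemma t4 : okL Lrel = true. Proof. vm_compute. reflexivity. Qed.


Section Coord.
Variables (P rr : nat) (h : 6 * rr < P) (rr0 : 0 < rr).

Lemma rot_fp v u j : v + u < 7 -> j = u * rr %[mod P] ->
  (cycle_perm P ^+ j)%g (fp h v) = fp h (v + u).
Proof.
move=> hvu hj; apply: val_inj => /=; rewrite rotE !fpE //; last by lia.
rewrite -modnDmr hj modnDmr -mulnDl modn_small //; nia.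
Qed.

Lemma tlf_inv L : ((tlf h L)^-1)%g = tlf h (rev L).
Proof.
elim: L => [|ab L IH] /=; first by rewrite invg1.
rewrite invMg IH tpermV rev_cons -cats1 tlf_cat /= mulg1 //.
Qed.

Lemma tc_tlf : three_cycle P rr = tlf h [:: (0,1); (0,2)].
Proof.
case: P h => [|P'] h'; first by lia.
rewrite three_cycleE /= mulg1.
have e v : v < 3 -> (inord (v * rr) : 'I_P'.+1) = fp h' v.
  move=> hv; apply: val_inj; rewrite /= inordK ?modn_small //; nia.
by rewrite -!e // mul0n mul1n.
Qed.

Lemma gn_tlf :
  [~ three_cycle P rr, three_cycle P rr ^ (cycle_perm P ^+ rr)]%g = tlf h Lc.
Proof.
rewrite tc_tlf (@tlf_conj _ _ h _ _ 1) //; last first.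
  by move=> v hv; apply: rot_fp => //; rewrite mul1n.
rewrite /commg /conjg !tlf_inv -!tlf_cat.
apply: tlf_eq => //; move=> u hu.
have := t1; move/allP/(_ u); rewrite mem_iota add0n => /(_ hu)/eqP <-.
by [].
Qed.
End Coord.


Section Words.
Variables d r : nat -> nat.
Definition SS := [:: alpha d; beta d r].
Definition letter := (bool * 'I_(size SS))%type.
Definition la : letter := (false, ord0).
Definition lai : letter := (true, ord0).
Definition lb : letter := (false, ord_max).
Definition lbi : letter := (true, ord_max).
Definition EE (w : seq letter) : PT d :=
  word_eval (@pt_mul d) (@pt_one d) (@pt_inv d) w.

Lemma EE_cons a w m : EE (a :: w) m = (EE [:: a] m * EE w m)%g.
Proof. by rewrite /EE /= /pt_mul /pt_one mulg1. Qed.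

Lemma EE_cat_m w1 w2 m : EE (w1 ++ w2) m = (EE w1 m * EE w2 m)%g.
Proof.
elim: w1 => [|a w IH]; first by rewrite /= mul1g.
by rewrite cat_cons EE_cons IH mulgA -EE_cons.
Qed.

Lemma EE_cat w1 w2 : EE (w1 ++ w2) = pt_mul (EE w1) (EE w2).
Proof. by apply: functional_extensionality_dep => m; rewrite EE_cat_m. Qed.

Lemma EE_la m : EE [:: la] m = alpha d m.
Proof. by rewrite /EE /= /pt_mul /pt_one mulg1. Qed.
Lemma EE_lai m : EE [:: lai] m = ((alpha d m)^-1)%g.
Proof. by rewrite /EE /= /pt_mul /pt_one /pt_inv mulg1. Qed.
Lemma EE_lb m : EE [:: lb] m = beta d r m.
Proof. by rewrite /EE /= /pt_mul /pt_one mulg1. Qed.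
Lemma EE_lbi m : EE [:: lbi] m = ((beta d r m)^-1)%g.
Proof. by rewrite /EE /= /pt_mul /pt_one /pt_inv mulg1. Qed.

Lemma EE_nseq a j m : EE (nseq j a) m = (EE [:: a] m ^+ j)%g.
Proof.
elim: j => [|j IH]; first by rewrite expg0.
by rewrite -[nseq j.+1 a]/([:: a] ++ nseq j a) EE_cat_m IH expgS.
Qed.

Definition wg k := [:: lbi] ++ nseq k lai ++ [:: lbi] ++ nseq k la ++
  [:: lb] ++ nseq k lai ++ [:: lb] ++ nseq k la.

Lemma size_wg k : size (wg k) = 4 * k + 4.
Proof. rewrite /wg !size_cat !size_nseq /=; lia. Qed.

Lemma EE_wg k m : EE (wg k) m =
  [~ beta d r m, beta d r m ^ (alpha d m ^+ k)]%g.
Proof.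
rewrite /wg !EE_cat_m !EE_nseq EE_la EE_lai EE_lb EE_lbi.
rewrite /commg /conjg !invMg !invgK expVgn !mulgA.
done.
Qed.
End Words.


Section Core.
Variables (d r : nat -> nat) (n : nat).
Hypotheses (hn : 0 < n) (hp : prime (d n)) (hr0 : 0 < r n) (h6 : 6 * r n < d n).
Hypothesis hiso : forall m, m != n ->
  [~ beta d r m, beta d r m ^ (alpha d m ^+ r n)]%g = 1%g.

Notation EE := (@EE d r).

Lemma okL_shift u : u <= 3 -> okL (shiftL u Lc).
Proof. by move=> hu; rewrite /okL /=; apply/and3P; split => //; apply/andP; split; lia. Qed.

Lemma core l M : 4 * r n + 4 <= l ->
  admits_quotient (@pt_mul d) (@pt_one d) (@pt_inv d) (SS d r) l M -> d n <= M.
Proof.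
move=> hl [gT [phi [hom inj card]]].
rewrite leqNgt; apply/negP => hM.
set k := r n.
have nn0 : (n == 0) = false by case: n hn.
have gn : EE (wg d r k) n = tlf h6 Lc.
  by rewrite EE_wg /alpha /beta nn0 gn_tlf.
have gm m : m != n -> EE (wg d r k) m = 1%g by move=> hm; rewrite EE_wg hiso.
have phiM w1 w2 : phi (EE (w1 ++ w2)) = (phi (EE w1) * phi (EE w2))%g.
  by rewrite EE_cat; apply: hom; [exists w1 | exists w2].
have phi1 : phi (EE [::]) = 1%g.
  have := phiM [::] [::]; rewrite cat0s => e.
  by apply: (@mulgI _ (phi (EE [::]))); rewrite mulg1 -e.
have EEone w : (forall m, EE w m = 1%g) -> phi (EE w) = 1%g.
  move=> hw; rewrite -phi1; congr phi.
  by apply: functional_extensionality_dep => m; rewrite hw.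
have phin x j : phi (EE (nseq j x)) = (phi (EE [:: x]) ^+ j)%g.
  elim: j => [|j IH]; first by rewrite expg0 phi1.
  by rewrite -[nseq j.+1 x]/([:: x] ++ nseq j x) phiM IH expgS.
set a := phi (EE [:: la d r]).
set o := #[a]%g.
have o_lt : o < d n.
  apply: leq_ltn_trans hM; rewrite -card -cardsT.
  by apply: dvdn_leq; [apply: cardG_gt0 | apply: order_dvdG; rewrite inE].
have cop : coprime o (d n).
  by rewrite coprime_sym prime_coprime // gtnNdvd // order_gt0.
pose J u := chinese o (d n) 0 (u * k).
have aJ u : (a ^+ J u = 1)%g.
  apply/eqP; rewrite -order_dvdn /dvdn /J chinese_modl // mod0n //.
have phiJi u : phi (EE (nseq (J u) (lai d r))) = 1%g.
  have e : phi (EE (nseq (J u) (lai d r) ++ nseq (J u) (la d r))) = 1%g.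
    apply: EEone => m; rewrite EE_cat_m !EE_nseq EE_la EE_lai expVgn mulVg //.
  by move: e; rewrite phiM !phin -/a aJ mulg1.
pose W u := nseq (J u) (lai d r) ++ (wg d r k ++ nseq (J u) (la d r)).
have phiW u : phi (EE (W u)) = phi (EE (wg d r k)).
  by rewrite /W !phiM phiJi !phin -/a aJ mul1g mulg1.
have EEW u m : EE (W u) m = (EE (wg d r k) m ^ (alpha d m ^+ J u))%g.
  by rewrite /W !EE_cat_m !EE_nseq EE_la EE_lai expVgn.
pose Wr us := flatten [seq W u | u <- us].
have phiWr us : phi (EE (Wr us)) = (phi (EE (wg d r k)) ^+ size us)%g.
  elim: us => [|u us IH]; first by rewrite expg0 phi1.
  by rewrite /Wr /= phiM -/(Wr us) IH phiW expgS.
have Wrm us m : m != n -> EE (Wr us) m = 1%g.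
  move=> hm; elim: us => [|u us IH] //.
  by rewrite /Wr /= EE_cat_m -/(Wr us) IH EEW gm // conj1g mulg1.
have Wrn us : all (fun u => u <= 3) us ->
    EE (Wr us) n = tlf h6 (flatten [seq shiftL u Lc | u <- us]).
  elim: us => [|u us IH] // /andP[hu hus].
  change (flatten [seq shiftL u0 Lc | u0 <- u :: us]) with
    (shiftL u Lc ++ flatten [seq shiftL u0 Lc | u0 <- us]).
  change (Wr (u :: us)) with (W u ++ Wr us).
  rewrite EE_cat_m IH // EEW gn tlf_cat.
  rewrite /alpha nn0 (@tlf_conj _ _ h6 _ _ u) ?okL_shift //.
  move=> v hv; apply: rot_fp => //.
  by rewrite /J chinese_modr.
have g13 : (phi (EE (wg d r k)) ^+ 13 = 1)%g.
  rewrite -(phiWr U); apply: EEone => m.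
  case: (eqVneq m n) => [->|hm]; last by rewrite Wrm.
  rewrite Wrn // -/Lrel (@tlf_eq _ _ hr0 h6 _ [::]) //.
  move=> u hu; have := t2; move/allP/(_ u); rewrite mem_iota add0n => /(_ hu)/eqP.
  by [].
have g2 : (phi (EE (wg d r k)) ^+ 2 = 1)%g.
  rewrite expgS expg1 -phiM; apply: EEone => m.
  case: (eqVneq m n) => [->|hm]; last by rewrite EE_cat_m gm // mulg1.
  rewrite EE_cat_m gn -tlf_cat (@tlf_eq _ _ hr0 h6 _ [::]) //.
  move=> u hu; have := t3; move/allP/(_ u); rewrite mem_iota add0n => /(_ hu)/eqP.
  by [].
have g1 : phi (EE (wg d r k)) = phi (EE [::]).
  rewrite phi1 -[phi _]expg1 -g13.
  by rewrite -[13]/(1 + 2 * 6) expgD expgM g2 expg1n mulg1.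
have hb1 : in_ball (@pt_mul d) (@pt_one d) (@pt_inv d) (SS d r) l (EE (wg d r k)).
  by exists (wg d r k); split => //; rewrite size_wg.
have hb0 : in_ball (@pt_mul d) (@pt_one d) (@pt_inv d) (SS d r) l (EE [::]).
  by exists [::].
have e := inj _ _ hb1 hb0 g1.
have := congr1 (fun x => x n) e; rewrite gn => e2.
have e3 : tlf h6 Lc (fp h6 0) = fp h6 0 by rewrite e2 perm1.
move: e3; rewrite (@tlf_f _ _ hr0 h6) // => /eqP.
by rewrite (@fp_inj _ _ hr0 h6).
Qed.
End Core.


Section Exist.
Variables (d r : nat -> nat).
Notation EE := (@EE d r).
Notation letter := (letter d r).

Fixpoint wu (l : nat) : seq (seq letter) :=
  if l is l'.+1 then [::] :: [seq a :: w | a <- enum {: letter}, w <- wu l']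
  else [:: [::]].

Lemma wuP l w : size w <= l -> w \in wu l.
Proof.
elim: l w => [|l IH] [|a w] //= hs.
rewrite inE; apply/orP; right.
by apply: (allpairs_f (fun a w => a :: w)); rewrite ?mem_enum // IH.
Qed.

Lemma differ (x y : PT d) : x <> y -> exists m, x m <> y m.
Proof.
move=> hxy; apply: NNPP => hn; apply: hxy.
apply: functional_extensionality_dep => m; apply: NNPP => hm.
by apply: hn; exists m.
Qed.

Lemma sepl (xs : seq (seq letter)) (x : seq letter) : exists M,
  forall y, y \in xs -> EE x <> EE y -> exists m, m < M /\ EE x m <> EE y m.
Proof.
elim: xs => [|y ys [M IH]]; first by exists 0.
case: (classic (EE x = EE y)) => [exy|nxy].
  exists M => y' /predU1P[->//|hy] hne; exact: IH.
case: (differ nxy) => m0 hm0.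
exists (maxn M m0.+1) => y' /predU1P[->|hy] hne.
  by exists m0; split => //; rewrite leq_max ltnSn orbT.
case: (IH y' hy hne) => m [hm hne'].
by exists m; split => //; rewrite leq_max hm.
Qed.

Lemma sep (ws : seq (seq letter)) : exists M,
  forall w1 w2, w1 \in ws -> w2 \in ws -> EE w1 <> EE w2 ->
  exists m, m < M /\ EE w1 m <> EE w2 m.
Proof.
elim: ws => [|w ws [M1 IH]]; first by exists 0.
case: (sepl ws w) => M2 h2.
exists (maxn M1 M2) => w1 w2 /predU1P[->|h1] /predU1P[->|h2'] hne //.
- case: (h2 w2 h2' hne) => m [hm hm']; exists m; split => //.
  by rewrite leq_max hm orbT.
- have hne' : EE w <> EE w1 by move=> e; apply: hne.
  case: (h2 w1 h1 hne') => m [hm hm']; exists m; split.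
    by rewrite leq_max hm orbT.
  by move=> e; apply: hm'.
- case: (IH w1 w2 h1 h2' hne) => m [hm hm']; exists m; split => //.
  by rewrite leq_max hm.
Qed.

Section Quot.
Variable M : nat.
Definition TT := {m : 'I_M & 'I_(d m)}.
Definition phif (x : PT d) (t : TT) : TT :=
  Tagged (fun m : 'I_M => 'I_(d m)) (x (tag t) (tagged t)).
Lemma phif_inj x : injective (phif x).
Proof.
apply: (can_inj (g := phif (pt_inv x))).
by case=> m i; rewrite /phif /pt_inv /= permK.
Qed.
Definition phiq (x : PT d) : {perm TT} := perm (@phif_inj x).
End Quot.

Lemma exists_quot l : exists m,
  admits_quotient (@pt_mul d) (@pt_one d) (@pt_inv d) (SS d r) l m.
Proof.
case: (sep (wu l)) => M hM.
exists #|{perm TT M}|; exists ({perm TT M} : finGroupType); exists (@phiq M).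
split => //.
- move=> x y _ _; apply/permP => t; rewrite permM !permE /phif /pt_mul /=.
  by rewrite permM.
- move=> x y [w1 [s1 <-]] [w2 [s2 <-]] e.
  apply: NNPP => hne.
  case: (hM w1 w2 (wuP s1) (wuP s2) hne) => m [hm hm'].
  apply: hm'; apply/permP => i.
  have := congr1 (fun s : {perm TT M} => s (Tagged (fun m : 'I_M => 'I_(d m)) (i : 'I_(d (Ordinal hm))))) e.
  rewrite !permE /phif /=.
  by move=> h; exact: (eq_from_Tagged h).
Qed.
End Exist.


Section Constr.
Variable F : nat -> nat.
Hypothesis HF : forall m n, 0 < m -> m < n -> F m < F n.

Definition BB x := F (4 * x + 4) + 7 * x + 7.

Lemma BB_mono x y : x <= y -> BB x <= BB y.
Proof.
move=> hxy; rewrite /BB.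
have : F (4 * x + 4) <= F (4 * y + 4).
  move: hxy; rewrite leq_eqVlt => /orP[/eqP->//|h].
  by apply: ltnW; apply: HF; lia.
lia.
Qed.

Lemma exP x : exists q, prime q && (BB x <= q).
Proof. by case: (prime_above (BB x)) => q h1 h2; exists q; rewrite h2 ltnW. Qed.

Definition Dp x := ex_minn (exP x).

Lemma Dp_prime x : prime (Dp x).
Proof. by rewrite /Dp; case: ex_minnP => q /andP[]. Qed.
Lemma Dp_ge x : BB x <= Dp x.
Proof. by rewrite /Dp; case: ex_minnP => q /andP[]. Qed.
Lemma Dp_mono x y : x <= y -> Dp x <= Dp y.
Proof.
move=> hxy; rewrite {1}/Dp; case: ex_minnP => q _ hmin; apply: hmin.
by rewrite Dp_prime (leq_trans (BB_mono hxy)) // Dp_ge.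
Qed.

Fixpoint rp (n : nat) : nat * nat :=
  if n is n'.+1 then
    ((rp n').1 + 2 * (rp n').2, (rp n').2 * Dp ((rp n').1 + 2 * (rp n').2))
  else (1, 1).

Definition rr n := (rp n.-1).1.
Definition PP n := (rp n.-1).2.
Definition dd n := Dp (rr n.+1).

Lemma rrS n : 0 < n -> rr n.+1 = rr n + 2 * PP n.
Proof. by case: n. Qed.
Lemma PPS n : 0 < n -> PP n.+1 = PP n * dd n.
Proof. by case: n. Qed.

Lemma dd_gt0 n : 0 < dd n.
Proof. exact: prime_gt0 (Dp_prime _). Qed.

Lemma PP_gt0 n : 0 < PP n.
Proof.
elim: n => [|n IH] //; case: n IH => [|n] IH //.
by rewrite PPS // muln_gt0 IH dd_gt0.
Qed.

Lemma rr_odd n : odd (rr n).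
Proof.
elim: n => [|n IH] //; case: n IH => [|n] IH //.
by rewrite rrS // oddD IH oddM.
Qed.

Lemma rr_lt n : 0 < n -> rr n < rr n.+1.
Proof. by move=> hn; rewrite rrS //; have := PP_gt0 n; lia. Qed.

Lemma rr_ge n : n <= rr n.
Proof.
elim: n => [|n IH] //; case: n IH => [|n] IH //.
by have := rr_lt (isT : 0 < n.+1); lia.
Qed.

Lemma rr_mono m n : 0 < m -> m < n -> rr m < rr n.
Proof.
move=> hm; elim: n => [|n IH] //; rewrite ltnS leq_eqVlt => /orP[/eqP e|h].
  by subst; exact: rr_lt.
by apply: ltn_trans (IH h) (rr_lt _); lia.
Qed.

Lemma rr_le m n : 0 < m -> m <= n -> rr m <= rr n.
Proof.
move=> hm; rewrite leq_eqVlt => /orP[/eqP->//|h]; exact: ltnW (rr_mono hm h).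
Qed.

Lemma dd_ge n : 7 * rr n.+1 + 7 <= dd n.
Proof. apply: leq_trans (Dp_ge _); rewrite /BB; lia. Qed.

Lemma dvd_PP m n : 0 < m -> m < n -> dd m %| PP n.
Proof.
move=> hm; elim: n => [|n IH] //; rewrite ltnS leq_eqVlt => /orP[/eqP<-|h].
  by rewrite PPS // dvdn_mull.
by rewrite PPS ?(leq_trans hm (ltnW h)) // dvdn_mulr // IH.
Qed.

Lemma rr_cong m n : 0 < m -> m < n -> rr n = rr m.+1 %[mod dd m].
Proof.
move=> hm; elim: n => [|n IH] //; rewrite ltnS leq_eqVlt => /orP[/eqP<-//|h].
rewrite rrS; last by lia.
by rewrite -(divnK (dvd_PP hm h)) mulnA addnC modnMDl IH.
Qed.
End Constr.


Lemma iso F n m : 0 < n -> m != n ->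
  [~ beta (dd F) (rr F) m, beta (dd F) (rr F) m ^ (alpha (dd F) m ^+ rr F n)]%g = 1%g.
Proof.
move=> hn hmn; rewrite /beta /alpha.
case: eqP => [_|/eqP hm0]; first by rewrite expg1n conjg1 comm1g.
have hm : 0 < m by case: m hm0 hmn {hn}.
apply/eqP/commgP.
have h1 := dd_ge F m; have h2 := rr_lt F hm; have h0 := rr_ge F m.
case: (ltngtP m n) => [hlt|hgt|e]; last by rewrite e eqxx in hmn.
- have ho := rr_odd F m.+1.
  have hod : rr F m.+1 = (rr F m.+1)./2.*2 + 1 by rewrite -{1}(odd_double_half (rr F m.+1)) ho addnC.
  apply: tc_commute; rewrite ?(rr_cong F hm hlt) ?modn_small; try lia;
    apply/eqP; rewrite -?muln2 in hod; lia.
- have h3 := rr_mono F hn hgt; have h4 := rr_ge F n.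
  apply: tc_commute; rewrite ?modn_small; try lia; apply/eqP; lia.
Qed.

Theorem theorem3p14 :
  exists C0 : nat, 0 < C0 /\
  forall F : nat -> nat,
    (forall m n, 0 < m -> m < n -> F m < F n) ->
    exists d r : nat -> nat,
      [/\ (forall m n, 0 < m -> m <= n -> d m <= d n),
          (forall n, 0 < n ->
             prime (d n) /\ 5 <= d n /\ 2 * r n + 1 <= d n /\ n <= r n /\
             n <= d n - 2 * r n /\ 3 * r n <= d n),
          (forall m n, 0 < m -> m < n -> r m < r n)
        & (forall n, C0 <= n -> F n <= RF_alpha_beta d r n)].
Proof.
exists 8; split => // F HF; exists (dd F), (rr F); split.
- move=> m n hm hmn; rewrite /dd; apply: Dp_mono => //.
  by apply: rr_le; lia.
- move=> n hn; have h1 := dd_ge F n; have h2 := rr_lt F hn; have h0 := rr_ge F n.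
  split; first exact: Dp_prime.
  by repeat split; lia.
- by move=> m n hm hmn; apply: rr_mono.
move=> l hl.
rewrite /RF_alpha_beta /RF_growth.
case: excluded_middle_informative => [H|H]; last first.
  by exfalso; apply: H; apply: exists_quot.
case: ex_minnP => M /admits_quotientbP hM _.
have exn : exists n, (0 < n) && (4 * rr F n + 4 <= l).
  by exists 1; apply/andP; split => //; rewrite /rr /=; lia.
have ubn : forall i, (0 < i) && (4 * rr F i + 4 <= l) -> i <= l.
  by move=> i /andP[_ h]; have := rr_ge F i; lia.
case: (ex_maxnP exn ubn) => n /andP[hn hln] hmax.
have hnx : l < 4 * rr F n.+1 + 4.
  rewrite ltnNge; apply/negP => h.
  by have := hmax n.+1; rewrite /= h => /(_ isT); rewrite ltnn.
have h1 := dd_ge F n; have h2 := rr_lt F hn; have h0 := rr_ge F n.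
have hcore : dd F n <= M.
  apply: (@core (dd F) (rr F) n hn (Dp_prime _ _) _ _ _ l M hln hM); try lia.
  by move=> m hm; apply: iso.
apply: leq_trans hcore.
have hB := Dp_ge F (rr F n.+1).
have hF : F l < F (4 * rr F n.+1 + 4) by apply: HF; lia.
rewrite /dd; move: hB; rewrite /BB; lia.
Qed.
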